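(* Let $X$ be a complex Hilbert space with inner product $(\cdot,\cdot)_X$ and norm $\|\cdot\|_X$. Let $\mathbb{U}\ni\boldsymbol y\mapsto f(\boldsymbol y)\in X$ be $(\boldsymbol b,p,\varepsilon)$-holomorphic and continuous when $\mathbb{U}$ is equipped with the product topology. Then the map $\mathbb{U}\ni\boldsymbol y\mapsto\|f(\boldsymbol y)\|_X^2\in\mathbb{R}$ is $(\boldsymbol b,p,\varepsilon)$-holomorphic and continuous with the same $\boldsymbol b\in\ell^p(\mathbb{N})$, $p\in(0,1)$ and $\varepsilon>0$.
   Context: $\mathbb{U}=[-1,1]^{\mathbb{N}}$. For $s>1$ let $\mathcal{E}_s=\{(z+z^{-1})/2: z\in\mathbb{C},\ 1\le|z|\le s\}$; for a sequence $\boldsymbol\rho=(\rho_j)_{j\ge1}$ with $\rho_j>1$ let $\mathcal{E}_{\boldsymbol\rho}=\bigotimes_{j\ge1}\mathcal{E}_{\rho_j}$ and $\mathcal{O}_{\boldsymbol\rho}=\bigotimes_{j\ge1}\mathcal{O}_{\rho_j}$ with $\mathcal{O}_{\rho}=\{z\in\mathbb{C}:\operatorname{dist}(z,[-1,1])<\rho-1\}$. For a complex Banach space $Y$, $\boldsymbol b\in\ell^p(\mathbb{N})$ with $p\in(0,1)$ (nonincreasing) and $\varepsilon>0$, a map $g:\mathbb{U}\to Y$ is $(\boldsymbol b,p,\varepsilon)$-holomorphic if: (1) it is uniformly bounded on $\mathbb{U}$; (2) for every sequence $\boldsymbol\rho$ of numbers strictly larger than one with $\sum_{j\ge1}(\rho_j-1)b_j\le\varepsilon$,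 $g$ admits an extension $\boldsymbol z\mapsto g(\boldsymbol z)$ to $\mathcal{O}_{\boldsymbol\rho}$ that is holomorphic with respect to each variable $z_j$; (3) there is $C_\varepsilon>0$ with $\sup_{\boldsymbol z\in\mathcal{E}_{\boldsymbol\rho}}\|g(\boldsymbol z)\|_Y\le C_\varepsilon$. For real-valued maps, $Y=\mathbb{C}$ is used for the extension. *)

(* Defs.v *)
From HB Require Import structures.
From mathcomp Require Import all_boot all_order all_algebra.
From mathcomp Require Import all_classical all_reals all_analysis.
From mathcomp Require Import complex.
Import Order.TTheory GRing.Theory Num.Theory ComplexField.
Import numFieldNormedType.Exports.

Set Implicit Arguments.
Unset Strict Implicit.
Unset Printing Implicit Defensive.

Local Open Scope classical_set_scope.
Local Open Scope ring_scope.

Section BPE.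
Variable R : realType.
Local Notation C := R[i].

(* U = [-1,1]^N ; sequences are indexed from 0 (j = 0 plays the role of j = 1) *)
Definition cubeU : set (nat -> R) := [set y | forall j, -1 <= y j <= 1].

Definition cplx (y : nat -> R) : nat -> C := fun j => (y j)%:C%C.

Definition bernstein (s : R) : set C :=
  [set (z + z^-1) / 2 | z in [set z : C | 1 <= Normc.normc z <= s]].

Definition dist_seg (z : C) : R :=
  inf [set Normc.normc (z - t%:C%C) | t in [set t : R | -1 <= t <= 1]].

Definition Oset (r : R) : set C := [set z | dist_seg z < r - 1].

Definition prodset (S : R -> set C) (rho : nat -> R) : set (nat -> C) :=
  [set z | forall j, S (rho j) (z j)].

Definition updseq (z : nat -> C) (j : nat) (w : C) : nat -> C :=
  fun k => if k == j then w else z k.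

Definition sep_holomorphic (Y : normedModType C) (O : set (nat -> C))
    (F : (nat -> C) -> Y) : Prop :=
  forall z, O z -> forall j : nat,
    derivable (fun w : C^o => F (updseq z j w)) (z j) 1.

Definition admissible (b : nat -> R) (eps : R) (rho : nat -> R) : Prop :=
  (forall j, 1 < rho j) /\
  (\sum_(0 <= j <oo) ((rho j - 1) * b j)%:E <= eps%:E)%E.

(* (b,p,eps)-holomorphy of a Y-valued map (Y a complex Banach space);
   p only enters through the standing assumption b \in l^p, p in (0,1). *)
Definition bpe_holomorphic (Y : normedModType C) (b : nat -> R) (p eps : R)
    (g : (nat -> R) -> Y) : Prop :=
  (exists M : R, forall y, cubeU y -> `|g y| <= M%:C%C) /\
  exists2 Ce : R, 0 < Ce &
    forall rho, admissible b eps rho ->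
      exists F : (nat -> C) -> Y,
        [/\ forall y, cubeU y -> F (cplx y) = g y,
            sep_holomorphic (prodset Oset rho) F &
            forall z, prodset bernstein rho z -> `|F z| <= Ce%:C%C].

Definition bpe_holomorphic_real (b : nat -> R) (p eps : R)
    (g : (nat -> R) -> R) : Prop :=
  bpe_holomorphic (Y := C^o) b p eps (fun y => (g y)%:C%C).

End BPE.

(* Main.v *)
Require Import Defs.
From HB Require Import structures.
From mathcomp Require Import all_boot all_order all_algebra.
From mathcomp Require Import all_classical all_reals all_analysis.
From mathcomp Require Import complex.
From mathcomp Require Import ring lra.
Import Order.TTheory GRing.Theory Num.Theory ComplexField.
Import numFieldNormedType.Exports.
Local Open Scope classical_set_scope.
Local Open Scope ring_scope.

Section IP.
Variable R : realType.
Variable X : completeNormedModType R[i].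
Variable ip : X -> X -> R[i].
Hypothesis ip_linear : forall (a : R[i]) (x x' y : X),
      ip (a *: x + x') y = a * ip x y + ip x' y.
Hypothesis ip_herm : forall x y : X, ip x y = (ip y x)^*.
Hypothesis ip_norm : forall x : X, `|x| ^+ 2 = ip x x.

Lemma ip0l y : ip 0 y = 0.
Proof.
have := ip_linear 1 0 0 y; rewrite scale1r addr0 mul1r.
by move=> /eqP; rewrite -{1}(addr0 (ip 0 y)) (inj_eq (addrI _)) eq_sym => /eqP. Qed.

Lemma ipDl x x' y : ip (x + x') y = ip x y + ip x' y.
Proof. by have := ip_linear 1 x x' y; rewrite scale1r mul1r. Qed.

Lemma ipZl a x y : ip (a *: x) y = a * ip x y.
Proof. by have := ip_linear a x 0 y; rewrite addr0 ip0l addr0. Qed.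

Lemma ipNl x y : ip (- x) y = - ip x y.
Proof. by rewrite -scaleN1r ipZl mulN1r. Qed.

Lemma ipBl x x' y : ip (x - x') y = ip x y - ip x' y.
Proof. by rewrite ipDl ipNl. Qed.

Lemma ipDr x y y' : ip x (y + y') = ip x y + ip x y'.
Proof. by rewrite [LHS]ip_herm ipDl rmorphD (ip_herm x y) (ip_herm x y'). Qed.

Lemma ipZr a x y : ip x (a *: y) = a^* * ip x y.
Proof. by rewrite [LHS]ip_herm ipZl rmorphM (ip_herm x y). Qed.

Lemma ip0r x : ip x 0 = 0.
Proof. by rewrite ip_herm ip0l rmorph0. Qed.

Lemma ipNr x y : ip x (- y) = - ip x y.
Proof. by rewrite [LHS]ip_herm ipNl rmorphN (ip_herm x y). Qed.

Lemma ipBr x y y' : ip x (y - y') = ip x y - ip x y'.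
Proof. by rewrite ipDr ipNr. Qed.

Lemma ip_CS x y : `|ip x y| <= `|x| * `|y|.
Proof.
have [->|y0] := eqVneq y 0; first by rewrite ip0r normr0 normr0 mulr0.
set a := ip x y; set n := ip y y.
have n0 : 0 < n by rewrite /n -ip_norm exprn_gt0 // normr_gt0.
have nr : n^* = n by apply: conj_Creal; exact: gtr0_real.
have key : ip (x - (a / n) *: y) (x - (a / n) *: y) = ip x x - a * a^* / n.
  have cl : (a / n)^* = a^* / n.
    by rewrite rmorphM fmorphV; congr (_ * _ ^-1); exact: nr.
  rewrite ipBl !ipBr !ipZl !ipZr -/a -/n cl.
  rewrite [ip y x]ip_herm -/a.
  by field; rewrite gt_eqF.
have h0 : 0 <= ip x x - a * a^* / n by rewrite -key -ip_norm exprn_ge0.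
have : `|a| ^+ 2 <= (`|x| * `|y|) ^+ 2.
  rewrite normCK exprMn ip_norm ip_norm -/n.
  rewrite -(@ler_pM2r _ (n^-1)) ?invr_gt0 // mulfK ?gt_eqF //.
  by rewrite -subr_ge0.
by rewrite ler_pXn2r // nnegrE ?mulr_ge0.
Qed.

Lemma squeeze0 {T : Type} (F : set_system T) {FF : Filter F} (g k : T -> R[i]^o) :
  (forall t, `|g t| <= `|k t|) -> k @ F --> 0 -> g @ F --> 0.
Proof.
move=> gk /cvgr0Pnorm_lt kc; apply/cvgr0Pnorm_lt => e e0.
by near do apply: (le_lt_trans (gk _)); apply: kc.
Unshelve. all: by end_near. Qed.

Lemma ip_cvg {T : Type} (F : set_system T) {FF : Filter F} (u v : T -> X) u0 v0 :
  u @ F --> u0 -> v @ F --> v0 -> (fun t => ip (u t) (v t) : R[i]^o) @ F --> (ip u0 v0 : R[i]^o).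
Proof.
move=> cu cv.
apply: (@cvg_zero _ (R[i]^o) T F FF).
apply: (@squeeze0 _ F _ _ (fun t => `|u t - u0| * `|v t| + `|u0| * `|v t - v0|)).
  move=> t.
  change (`|ip (u t) (v t) - ip u0 v0| <= `|(`|u t - u0| * `|v t| + `|u0| * `|v t - v0|)|).
  have -> : ip (u t) (v t) - ip u0 v0 = ip (u t - u0) (v t) + ip u0 (v t - v0).
    by rewrite ipBl ipBr addrA subrK.
  rewrite [X in _ <= X]ger0_norm ?addr_ge0 ?mulr_ge0 //.
  by apply: (le_trans (ler_normD _ _)); apply: lerD; apply: ip_CS.
have cu0 : (`|u t - u0| : R[i]^o) @[t --> F] --> (0 : R[i]^o).
  by have := cvg_norm (cvgB cu (cvg_cst u0)); rewrite subrr normr0; apply.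
have cv0 : (`|v t - v0| : R[i]^o) @[t --> F] --> (0 : R[i]^o).
  by have := cvg_norm (cvgB cv (cvg_cst v0)); rewrite subrr normr0; apply.
have := cvgD (cvgM cu0 (cvg_norm cv)) (cvgM (cvg_cst (`|u0| : R[i]^o)) cv0).
by rewrite mul0r mulr0 addr0; apply.
Qed.

Lemma cjM (x y : R[i]) : (x * y)^* = x^* * y^*. Proof. exact: rmorphM. Qed.
Lemma cjD (x y : R[i]) : (x + y)^* = x^* + y^*. Proof. exact: rmorphD. Qed.
Lemma cjB (x y : R[i]) : (x - y)^* = x^* - y^*. Proof. exact: rmorphB. Qed.
Lemma cjV (x : R[i]) : (x^-1)^* = (x^*)^-1. Proof. exact: fmorphV. Qed.
Lemma cj0 : (0 : R[i])^* = 0. Proof. exact: conjC0. Qed.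
Lemma cjK (x : R[i]) : (x^*)^* = x. Proof. exact: conjCK. Qed.
Lemma ipconj x y : (ip x y)^* = ip y x. Proof. by rewrite (ip_herm y x). Qed.
Lemma sC (k x : R[i]^o) : k *: x = k * x. Proof. by []. Qed.
Lemma s1 (h : R[i]^o) : h *: (1 : R[i]^o) = h.
Proof. by rewrite sC mulr1. Qed.

Lemma conj_cvg {T : Type} (F : set_system T) {FF : Filter F} (f : T -> R[i]^o) (l : R[i]^o) :
  f @ F --> l -> (fun t => (f t)^* : R[i]^o) @ F --> (l^* : R[i]^o).
Proof.
move=> /(@cvgrPdist_lt _ (R[i]^o) _ F FF) h.
apply/(@cvgrPdist_lt _ (R[i]^o) _ F FF) => e e0.
by apply: filterS (h e e0) => t; rewrite -cjB norm_conjC.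
Qed.

Lemma near_conj (P : R[i]^o -> Prop) :
  (\forall k \near (0:R[i]^o)^', P k) -> \forall h \near (0:R[i]^o)^', P (h^* : R[i]^o).
Proof.
rewrite !near_withinE => hP.
have c0 : (fun h : R[i]^o => (h^* : R[i]^o)) @ (nbhs (0:R[i]^o)) --> (0:R[i]^o).
  have := @conj_cvg _ (nbhs (0:R[i]^o)) _ id 0 (@cvg_id _ _).
  by rewrite (_ : (0 : R[i]^o)^* = 0) //; [apply | exact: cj0].
have H0 := c0 (fun k : R[i]^o => k != 0 -> P k) hP.
move: H0; rewrite nbhs_filterE => H0.
near=> h => hn0.
have H1 : h^* != 0 -> P h^*.
  near: h. exact: H0.
apply: H1.
by rewrite (_ : (h^* == 0) = (h == 0)) //; exact: conjC_eq0.
Unshelve. all: by end_near. Qed.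

Lemma ip_deriv (A H : R[i]^o -> X) (a : R[i]^o) :
  derivable A a 1 -> derivable H (a^* : R[i]^o) 1 ->
  derivable (fun w : R[i]^o => ip (A w) (H (w^* : R[i]^o)) : R[i]^o) a 1.
Proof.
move=> /cvg_ex[LA cA] /cvg_ex[LH cH].
set DA := fun h : R[i]^o => h^-1 *: (A (h + a) - A a).
set DH := fun k : R[i]^o => k^-1 *: (H (k + a^*) - H a^*).
have cA' : DA @ (0 : R[i]^o)^' --> LA.
  have -> : DA = (fun h => h^-1 *: ((A \o shift a) (h *: 1) - A a)).
    by apply: funext => h; rewrite /= s1.
  exact: cA.
have cH' : DH @ (0 : R[i]^o)^' --> LH.
  have -> : DH = (fun h => h^-1 *: ((H \o shift a^*) (h *: 1) - H a^*)).
    by apply: funext => h; rewrite /= s1.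
  exact: cH.
have cHc : (fun h : R[i]^o => DH (h^* : R[i]^o)) @ (0 : R[i]^o)^' --> LH.
  apply/(@cvgrPdist_lt _ X _ _ _) => e e0.
  apply: (@near_conj (fun k => `|LH - DH k| < e)).
  by move/(@cvgrPdist_lt _ X _ _ _): cH'; apply.
apply/cvg_ex; exists (ip LA (H a^*) + (ip LH (A a))^* : R[i]^o).
have -> : (fun h : R[i]^o => h^-1 *: (((fun w : R[i]^o => ip (A w) (H (w^* : R[i]^o)) : R[i]^o) \o shift a) (h *: 1) - ip (A a) (H a^*)))
   = (fun h : R[i]^o => ip (DA h) (H ((h^* : R[i]^o) + a^*)) + (ip (DH h^*) (A a))^* : R[i]^o).
  apply: funext => h; rewrite /= s1 sC /DA /DH.
  rewrite !ipZl !ipBl !cjM !cjB !cjV cjK !ipconj cjD.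
  by ring.
apply: cvgD.
  apply: ip_cvg => //.
  have -> : (fun h : R[i]^o => H ((h^* : R[i]^o) + a^*)) = (fun h : R[i]^o => H a^* + (h^* : R[i]^o) *: DH h^*).
    apply: funext => h; rewrite /DH.
    have [->|hn] := eqVneq (h^* : R[i]^o) 0; first by rewrite add0r scale0r addr0.
    by rewrite scalerA divff // scale1r subrKC.
  rewrite -[X in _ --> X](addr0 (H a^*)).
  apply: (@cvgD _ X _ _ _ (fun=> H a^*) (fun h : R[i]^o => (h^* : R[i]^o) *: DH h^*)); first exact: cvg_cst.
  rewrite -(scale0r LH).
  apply: (@cvgZ _ X _ _ _ (fun h : R[i]^o => (h^* : R[i]^o)) (fun h : R[i]^o => DH h^*)) => //.
  have c : (fun h : R[i]^o => (h^* : R[i]^o)) @ (0:R[i]^o)^' --> ((0:R[i]^o)^* : R[i]^o).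
    apply: (@conj_cvg _ _ _ id); exact: (@cvg_within _ (nbhs (0:R[i]^o)) _ _).
  by rewrite cj0 in c.
apply: (@conj_cvg _ _ _ (fun h : R[i]^o => ip (DH h^*) (A a) : R[i]^o)).
apply: (@ip_cvg _ _ _ (fun h : R[i]^o => DH h^*) (fun=> A a)) => //.
exact: cvg_cst.
Qed.
End IP.

Section Aux.
Context {R : realType}.

Definition conjs (z : nat -> R[i]) : nat -> R[i] := fun j => (z j)^*.

Lemma conj_real (t : R) : (t%:C%C : R[i])^* = t%:C%C.
Proof. exact: conjc_real. Qed.

Lemma normc_conj (x : R[i]) : Normc.normc x^* = Normc.normc x.
Proof. by case: x => a b; rewrite /Normc.normc /= sqrrN. Qed.

Lemma dist_seg_conj (w : R[i]) : dist_seg w^* = dist_seg w.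
Proof.
rewrite /dist_seg; congr inf; apply/seteqP; split => _ [t ht <-];
  exists t => //.
  by rewrite -normc_conj cjB conj_real.
by rewrite -[in RHS]normc_conj cjB conj_real.
Qed.

Lemma Oset_conj rho z : prodset (@Oset R) rho z -> prodset (@Oset R) rho (conjs z).
Proof. by move=> h j; rewrite /Oset /conjs /= dist_seg_conj; apply: h. Qed.

Lemma bern_conj rho z : prodset (@bernstein R) rho z -> prodset (@bernstein R) rho (conjs z).
Proof.
move=> h j; rewrite /conjs; have [u hu <-] := h j.
exists u^*; first by rewrite /= normc_conj.
rewrite cjM cjD !cjV.
by rewrite (_ : (2 : R[i])^* = 2) //; exact: conjC_nat.
Qed.

Lemma conjs_upd z j (w : R[i]) : conjs (updseq z j w) = updseq (conjs z) j w^*.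
Proof. by apply: funext => k; rewrite /conjs /updseq; case: eqP. Qed.

Lemma conjs_cplx y : conjs (@cplx R y) = cplx y.
Proof. by apply: funext => k; rewrite /conjs /cplx conj_real. Qed.

Lemma realsq (c : R[i]) : 0 <= c -> (complex.Re c)%:C%C = c.
Proof. move=> h; apply: RRe_real; exact: ger0_real. Qed.

Lemma Re_cvg {T : Type} (F : set_system T) {FF : Filter F} (c : T -> R[i]^o) (l : R[i]^o) :
  c @ F --> l -> (fun t => complex.Re (c t)) @ F --> complex.Re l.
Proof.
move=> /(@cvgrPdist_lt _ (R[i]^o) _ F FF) h.
apply/(@cvgrPdist_lt _ R _ F FF) => e e0.
have e0' : (0 : R[i]^o) < e%:C%C by rewrite ltcR.
apply: filterS (h _ e0') => t ht.
rewrite -raddfB -ltcR; apply: le_lt_trans ht.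
exact: normc_ge_Re.
Qed.
End Aux.

Theorem lemmaA1 (R : realType)
  (X : completeNormedModType R[i]) (ip : X -> X -> R[i])
  (ip_linear : forall (a : R[i]) (x x' y : X),
      ip (a *: x + x') y = a * ip x y + ip x' y)
  (ip_herm : forall x y : X, ip x y = (ip y x)^*)
  (ip_norm : forall x : X, `|x| ^+ 2 = ip x x)
  (b : nat -> R) (p eps : R)
  (hp : 0 < p < 1) (heps : 0 < eps)
  (hb_noninc : forall j, b j.+1 <= b j)
  (hb_lp : (\sum_(0 <= j <oo) (`|b j| `^ p)%:E < +oo)%E)
  (f : {ptws nat -> R} -> X)
  (hf : bpe_holomorphic b p eps f)
  (hfc : {within (@cubeU R : set {ptws nat -> R}), continuous f}) :
  bpe_holomorphic_real b p eps (fun y => complex.Re (`|f y| ^+ 2)) /\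
  {within (@cubeU R : set {ptws nat -> R}), continuous (fun y : {ptws nat -> R} => complex.Re (`|f y| ^+ 2))}.
Proof.
have [[M hM] [Ce Ce0 hCe]] := hf.
split; last first.
  move=> y; apply: Re_cvg.
  have h := cvgM (cvg_norm (hfc y)) (cvg_norm (hfc y)).
  exact: (h _ _ _).
split.
  exists (M ^+ 2) => y hy.
  rewrite realsq ?exprn_ge0 // normrX normr_id rmorphXn.
  have hy' := hM y hy.
  rewrite ler_pXn2r // nnegrE //; exact: le_trans hy'.
exists (Ce ^+ 2); first exact: exprn_gt0.
move=> rho hrho; have [F [Fext Fhol Fbd]] := hCe rho hrho.
exists (fun z => ip (F z) (F (conjs z))); split.
- move=> y hy; rewrite conjs_cplx Fext // realsq ?exprn_ge0 //.
- move=> z hz j.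
  have hz' := Oset_conj _ _ hz.
  have -> : (fun w : R[i]^o => ip (F (updseq z j w)) (F (conjs (updseq z j w))) : R[i]^o)
      = (fun w : R[i]^o => ip (F (updseq z j w)) ((fun u : R[i]^o => F (updseq (conjs z) j u)) (w^* : R[i]^o))).
    by apply: funext => w; rewrite conjs_upd.
  apply: (@ip_deriv R X ip ip_linear ip_herm ip_norm (fun w : R[i]^o => F (updseq z j w))
     (fun u : R[i]^o => F (updseq (conjs z) j u)) (z j)); first exact: Fhol.
  exact: (Fhol _ hz' j).
- move=> z hz.
  apply: le_trans (@ip_CS R X ip ip_linear ip_herm ip_norm _ _) _.
  rewrite rmorphXn expr2; apply: ler_pM => //.
  + exact: Fbd.
  + exact: (Fbd _ (bern_conj _ _ hz)).
Qed.
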